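(* Consider the two-server network of re-entrant lines with infinite supply described in the context, and suppose it is critical, i.e. $\sum_{j\in C_1(i)}\mu_{i,j}^{-1}=\sum_{j\in C_2(i)}\mu_{i,j}^{-1}$ for every $i=1,\dots,S$, where $C_\ell(i)=\{j\in\{0,\dots,n_i\}:\sigma(i,j)=\ell\}$. Then the network is non-stabilizable: there is no deterministic stationary non-idling policy under which the associated Markov process has a positive recurrent class that is reached with probability 1.
   Context: There are two servers, labeled 1 and 2, and $S\ge1$ job streams. Stream $i$ has $n_i+1$ operations $(i,0),(i,1),\dots,(i,n_i)$ with $n_i\ge1$; each operation $(i,j)$ is performed by a unique server $\sigma(i,j)\in\{1,2\}$ and completes at exponential rate $\mu_{i,j}>0$ (preemption allowed). Operation $(i,0)$ draws from an infinite supply of raw material and is always available; each operation $(i,j)$ with $j\ge1$ has an associated queue, so there are $M=\sum_i n_i$ queues and the state is the vector of queue lengths in $\mathbb{Z}_+^M$. Completion of $(i,0)$ adds a job to the queue of $(i,1)$; completion of $(i,j)$ for $1\le j\le n_i-1$ moves a job from the queue of $(i,j)$ to the queue of $(i,j+1)$; completion of $(i,n_i)$ removes a job from the queue of $(i,n_i)$. An operation $(i,j)$ with $j\ge1$ may be performed only if its queue is non-empty. A non-idling (deterministic stationary) policy assigns, as a function of the state, to each server one of its operations that may be performed. Given a policy, the chosen operations run simultaneously and the state jumps according to whichever completes first, giving a Markov jump process (equivalently its embedded discrete-time chain). The network is non-stabilizable if no non-idling policy makes this process have a positive recurrent class reached with probability 1. *)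

(* Defs.v *)
From HB Require Import structures.
From mathcomp Require Import all_boot all_order all_algebra.
From mathcomp Require Import all_classical all_reals all_analysis.
From Stdlib Require Import Relations.

Set Implicit Arguments.
Unset Strict Implicit.
Unset Printing Implicit Defensive.

Import Order.TTheory GRing.Theory Num.Theory numFieldNormedType.Exports.
Local Open Scope classical_set_scope.
Local Open Scope ring_scope.

(* Generic discrete-time Markov chain on an eqType T whose transition   *)
(* kernel has finite support: [step x] lists pairs (probability, next). *)
(* (Repeated targets are allowed; their weights add up.)               *)
Section Chain.
Variables (R : realType) (T : eqType) (step : T -> seq (R * T)).

Definition edge (x y : T) : Prop := has (fun p => (p.2 == y) && (0 < p.1)) (step x).

Definition leads : relation T := clos_refl_trans T edge.

(* weighted positions at time k of the paths started at x that avoid A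
   at times 1..k (time 0 is not checked) *)
Fixpoint walk (A : pred T) (k : nat) (x : T) : seq (R * T) :=
  match k with
  | 0 => [:: (1, x)]
  | k'.+1 => flatten [seq [seq (p.1 * q.1, q.2) | q <- step p.2 & q.2 \notin A]
                      | p <- walk A k' x]
  end.

(* P_x(tau_A = k) where tau_A = inf {k >= 1 : X_k \in A} *)
Definition firstpass (A : pred T) (x : T) (k : nat) : R :=
  match k with
  | 0 => 0
  | k'.+1 => \sum_(p <- walk A k' x) \sum_(q <- step p.2 | q.2 \in A) p.1 * q.1
  end.

Definition recurrent (y : T) : Prop :=
  series (firstpass (pred1 y) y) @ \oo --> (1 : R).

Definition positive_recurrent (y : T) : Prop :=
  recurrent y /\
  exists l : R, series (fun k => k%:R * firstpass (pred1 y) y k) @ \oo --> l.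

Definition comm_class (C : pred T) : Prop :=
  (exists x, x \in C) /\
  (forall x y, x \in C -> (y \in C <-> (leads x y /\ leads y x))).

Definition pos_rec_class (C : pred T) : Prop :=
  comm_class C /\ forall y, y \in C -> positive_recurrent y.

Definition reached_as (x0 : T) (C : pred T) : Prop :=
  x0 \in C \/ series (firstpass C x0) @ \oo --> (1 : R).

End Chain.

(* Streams i : 'I_S, stream i has operations j : 'I_(n i).+1 (operation *)
(* (i,0) draws from the infinite supply); the queue of operation (i,j), *)
(* j >= 1, is indexed by (i, j-1) : Queue n.                            *)
(* Servers 1 and 2 are represented by 0 and 1 in 'I_2.                 *)
Section Network.
Variables (S : nat) (n : 'I_S -> nat).

Definition Op := {i : 'I_S & 'I_(n i).+1}.
Definition Queue := {i : 'I_S & 'I_(n i)}.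
Definition op_of (i : 'I_S) (j : 'I_(n i).+1) : Op := Tagged (fun i => 'I_(n i).+1) j.

Definition State := {ffun Queue -> nat}.

Definition avail (x : State) (o : Op) : bool :=
  (val (tagged o) == 0%N) ||
  [exists q : Queue, [&& tag q == tag o, (val (tagged q)).+1 == val (tagged o)
                        & (0 < x q)%N]].

(* state after completion of operation o = (i,j): the queue of (i,j) (if
   j >= 1) loses a job, the queue of (i,j+1) (if j < n_i) gains one *)
Definition next (x : State) (o : Op) : State :=
  [ffun q : Queue => if tag q == tag o then
       (x q + (val (tagged q) == val (tagged o)) - ((val (tagged q)).+1 == val (tagged o)))%N
     else x q].

(* deterministic stationary non-idling policies: for each state and server
   the operation being performed (None = idle, only allowed if the server
   has no operation that may be performed) *)
Definition policy := State -> 'I_2 -> option Op.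

Definition nonidling (sigma : Op -> 'I_2) (pol : policy) : Prop :=
  forall (x : State) (l : 'I_2),
    match pol x l with
    | Some o => sigma o = l /\ avail x o
    | None => forall o : Op, sigma o = l -> ~~ avail x o
    end.

Variable R : realType.

(* embedded jump chain of the Markov jump process under policy pol *)
Definition active (pol : policy) (x : State) : seq Op := pmap (pol x) (enum 'I_2).

Definition total_rate (mu : Op -> R) (pol : policy) (x : State) : R :=
  \sum_(o <- active pol x) mu o.

Definition jump_step (mu : Op -> R) (pol : policy) (x : State) : seq (R * State) :=
  if active pol x is [::] then [:: (1, x)]
  else [seq (mu o / total_rate mu pol x, next x o) | o <- active pol x].

Definition critical (sigma : Op -> 'I_2) (mu : Op -> R) : Prop :=
  forall i : 'I_S,
    \sum_(j < (n i).+1 | sigma (op_of j) == 0) (mu (op_of j))^-1 =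
    \sum_(j < (n i).+1 | sigma (op_of j) == 1) (mu (op_of j))^-1.

End Network.

(* Main.v *)
Require Import Defs.
From HB Require Import structures.
From mathcomp Require Import all_boot all_order all_algebra.
From mathcomp Require Import all_classical all_reals all_analysis.
From mathcomp Require Import ring lra.
Import Order.TTheory GRing.Theory Num.Theory numFieldNormedType.Exports.
Local Open Scope classical_set_scope.
Local Open Scope ring_scope.
Set Implicit Arguments.
Unset Strict Implicit.
Unset Printing Implicit Defensive.
Section Gen.
Variables (R : realType) (T : eqType) (step : T -> seq (R * T)).
Implicit Types (l : seq (R * T)) (h : T -> R).

Definition Wl l h : R := \sum_(p <- l) p.1 * h p.2.
Definition stepL (A : pred T) l : seq (R * T) :=
  flatten [seq [seq (p.1 * q.1, q.2) | q <- step p.2 & q.2 \notin A] | p <- l].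
Definition Fl (A : pred T) l h : R :=
  \sum_(p <- l) p.1 * \sum_(q <- step p.2 | q.2 \in A) q.1 * h q.2.
Definition Pf h (x : T) : R := \sum_(q <- step x) q.1 * h q.2.

Lemma walkE A k x : walk step A k x = iter k (stepL A) [:: (1, x)].
Proof. by elim: k => //= k ->. Qed.

Lemma one_step A l h : Wl (stepL A l) h + Fl A l h = Wl l (Pf h).
Proof.
rewrite /Wl /Fl /stepL big_flatten /= big_map -big_split /=.
apply: eq_bigr => p _.
rewrite big_map big_filter /Pf [in RHS](bigID (fun q => q.2 \in A)) /= mulrDr addrC.
congr (_ + _); rewrite mulr_sumr; apply: eq_bigr => q _; by rewrite mulrA.
Qed.

Lemma fpE A x k : firstpass step A x k.+1 = Fl A (walk step A k x) (fun _ => 1).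
Proof.
rewrite /firstpass /Fl; apply: eq_bigr => p _; rewrite mulr_sumr.
by apply: eq_bigr => q _; rewrite mulr1.
Qed.

Lemma Fl0 y l h : h y = 0 -> Fl (pred1 y) l h = 0.
Proof.
move=> hy; rewrite /Fl big1 // => p _; rewrite big1 ?mulr0 // => q.
by rewrite inE => /eqP ->; rewrite hy mulr0.
Qed.

Lemma Wl_cat l1 l2 h : Wl (l1 ++ l2) h = Wl l1 h + Wl l2 h.
Proof. by rewrite /Wl big_cat. Qed.

Lemma WlD l h1 h2 : Wl l (fun x => h1 x + h2 x) = Wl l h1 + Wl l h2.
Proof. by rewrite /Wl -big_split; apply: eq_bigr => p _; rewrite mulrDr. Qed.

Lemma WlZ l c h : Wl l (fun x => c * h x) = c * Wl l h.
Proof. by rewrite /Wl mulr_sumr; apply: eq_bigr => p _; rewrite mulrCA. Qed.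

Lemma Wl_ext l h1 h2 : (forall p, p \in l -> p.1 * h1 p.2 = p.1 * h2 p.2) ->
  Wl l h1 = Wl l h2.
Proof. by move=> H; rewrite /Wl big_seq [RHS]big_seq; apply: eq_bigr. Qed.

Lemma Wl_le l h1 h2 : (forall p, p \in l -> p.1 * h1 p.2 <= p.1 * h2 p.2) ->
  Wl l h1 <= Wl l h2.
Proof. by move=> H; rewrite /Wl big_seq [leRHS]big_seq; apply: ler_sum. Qed.

Lemma stepL_cat A l1 l2 : stepL A (l1 ++ l2) = stepL A l1 ++ stepL A l2.
Proof. by rewrite /stepL map_cat flatten_cat. Qed.

Lemma iter_cat A m l1 l2 :
  iter m (stepL A) (l1 ++ l2) = iter m (stepL A) l1 ++ iter m (stepL A) l2.
Proof. by elim: m => //= m ->; rewrite stepL_cat. Qed.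

Definition scal (a : R) l : seq (R * T) := [seq (a * p.1, p.2) | p <- l].

Lemma stepL_scal A a l : stepL A (scal a l) = scal a (stepL A l).
Proof.
rewrite /stepL /scal map_flatten -!map_comp; congr flatten.
apply: eq_map => p /=; rewrite -map_comp; apply: eq_map => q /=.
by rewrite mulrA.
Qed.

Lemma iter_scal A m a l : iter m (stepL A) (scal a l) = scal a (iter m (stepL A) l).
Proof. by elim: m => //= m ->; rewrite stepL_scal. Qed.

Lemma iter_nil A m : iter m (stepL A) [::] = [::].
Proof. by elim: m => //= m ->. Qed.

Lemma Wl_scal a l h : Wl (scal a l) h = a * Wl l h.
Proof. by rewrite /Wl big_map mulr_sumr; apply: eq_bigr => p _; rewrite mulrA. Qed.

Lemma Wl_decomp A m l h :
  Wl (iter m (stepL A) l) h = \sum_(p <- l) p.1 * Wl (iter m (stepL A) [:: (1, p.2)]) h.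
Proof.
elim: l => [|p l IH]; first by rewrite iter_nil /Wl !big_nil.
rewrite -cat1s iter_cat Wl_cat IH big_cons; congr (_ + _).
have -> : [:: p] = scal p.1 [:: (1, p.2)] by rewrite /scal /= mulr1; case: p.
by rewrite iter_scal Wl_scal.
Qed.

End Gen.
Section Rec.
Variables (R : realType) (T : eqType) (step : T -> seq (R * T)) (y : T).
Hypothesis step_ge0 : forall x q, q \in step x -> 0 <= q.1.
Hypothesis step_sum1 : forall x, \sum_(q <- step x) q.1 = 1.

Let A := pred1 y.
Let lk k := iter k (stepL step A) [:: (1, y)].
Let w k := Wl (lk k) (fun _ => 1).
Let fp k := firstpass step A y k.

Lemma mem_stepL p l : p \in stepL step A l ->
  exists p' q, [/\ p' \in l, q \in step p'.2, q.2 \notin A & p = (p'.1 * q.1, q.2)].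
Proof.
rewrite /stepL => /flattenP [s /mapP [p' Hp' ->]] /mapP [q].
by rewrite mem_filter => /andP [HA Hq] ->; exists p', q.
Qed.

Lemma mem_stepL2 p' q l : p' \in l -> q \in step p'.2 -> q.2 \notin A ->
  (p'.1 * q.1, q.2) \in stepL step A l.
Proof.
move=> Hp Hq HA; apply/flattenP; exists [seq (p'.1 * q.1, q.2) | q <- step p'.2 & q.2 \notin A].
  by apply/mapP; exists p'.
by apply/mapP; exists q => //; rewrite mem_filter HA.
Qed.

Lemma iter_ge0 m l : (forall p, p \in l -> 0 <= p.1) ->
  forall p, p \in iter m (stepL step A) l -> 0 <= p.1.
Proof.
move=> H; elim: m => [|m IH] p /=; first exact: H.
move=> /mem_stepL [p' [q [Hp' Hq _ ->]]] /=.
by apply: mulr_ge0; [apply: IH | apply: (step_ge0 Hq)].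
Qed.

Lemma lk_ge0 k p : p \in lk k -> 0 <= p.1.
Proof. by apply: iter_ge0 => p'; rewrite inE => /eqP -> /=. Qed.

Lemma Pf1 x : Pf step (fun _ => 1) x = 1.
Proof. by rewrite /Pf -[RHS](step_sum1 x); apply: eq_bigr => q _; rewrite mulr1. Qed.

Lemma fpS k : fp k.+1 = Fl step A (lk k) (fun _ => 1).
Proof. by rewrite /fp fpE walkE. Qed.

Lemma w_rec k : w k.+1 + fp k.+1 = w k.
Proof.
rewrite fpS /w /lk /= one_step; apply: Wl_ext => p _; by rewrite Pf1.
Qed.

Lemma w0 : w 0 = 1.
Proof. by rewrite /w /Wl /= big_seq1 mulr1. Qed.

Lemma w_ge0 k : 0 <= w k.
Proof. rewrite /w /Wl big_seq; apply: sumr_ge0 => p Hp; rewrite mulr1; exact: lk_ge0 Hp. Qed.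

Lemma fp_ge0 k : 0 <= fp k.
Proof.
case: k => [|k]; first by rewrite /fp /firstpass.
rewrite fpS /Fl big_seq; apply: sumr_ge0 => p Hp; apply: mulr_ge0; first exact: lk_ge0 Hp.
rewrite big_seq_cond; apply: sumr_ge0 => q /andP [Hq _]; rewrite mulr1; exact: step_ge0 Hq.
Qed.

Lemma w_noninc k : w k.+1 <= w k.
Proof. by rewrite -(w_rec k) lerDl fp_ge0. Qed.

Lemma w_mono i j : (i <= j)%N -> w j <= w i.
Proof.
move/subnK => <-; elim: (j - i)%N => [|m IH] //=.
by rewrite addSn; apply: le_trans (w_noninc _) IH.
Qed.

Lemma seriesfp k : series fp k.+1 = 1 - w k.
Proof.
elim: k => [|k IH]; first by rewrite seriesSr /series /= big_geq // add0r /fp /firstpass w0 subrr.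
by rewrite seriesSr IH -(w_rec k); ring.
Qed.

Lemma seriesQ N : series (fun k => k%:R * fp k) N.+1 = \sum_(0 <= k < N.+1) (w k - w N).
Proof.
elim: N => [|N IH].
  by rewrite seriesSr /series /= big_geq // big_nat1 subrr mul0r addr0.
rewrite seriesSr IH.
have -> : \sum_(0 <= i < N.+2) (w i - w N.+1) = \sum_(0 <= i < N.+1) (w i - w N.+1).
  by rewrite big_nat_recr //= subrr addr0.
have -> : \sum_(0 <= i < N.+1) (w i - w N.+1) =
  \sum_(0 <= i < N.+1) (w i - w N) + \sum_(0 <= i < N.+1) (w N - w N.+1).
  by rewrite -big_split /=; apply: eq_bigr => i _; ring.
congr (_ + _); rewrite sumr_const_nat subn0 -(w_rec N) mulr_natl.
by congr (_ *+ _); ring.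
Qed.

Variable E : R.
Hypothesis recy : series fp @ \oo --> (1 : R).
Hypothesis pry : series (fun k => k%:R * fp k) @ \oo --> E.

Lemma Tbound L : \sum_(0 <= k < L) w k <= E.
Proof.
set h := fun N => series (fun k => k%:R * fp k) N + L%:R * (1 - series fp N).
have Hc : h @ \oo --> E + L%:R * (1 - 1).
  apply: cvgD => //; apply: cvgM; [exact: cvg_cst | apply: cvgB => //; exact: cvg_cst].
have Hn : \forall N \near \oo, \sum_(0 <= k < L) w k <= h N.
  near=> N.
  have HN : (L.+1 <= N)%N by near: N; exact: nbhs_infty_ge.
  have EN : N.-1.+1 = N := prednK (leq_trans (ltn0Sn L) HN).
  rewrite -EN in HN *; move: (N.-1) HN => {EN} N' HN.
  rewrite /h seriesQ seriesfp (_ : 1 - (1 - w N') = w N'); last by ring.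
  rewrite (big_cat_nat (leq0n L) (ltnW HN)) /=.
  have -> : \sum_(0 <= i < L) (w i - w N') = \sum_(0 <= i < L) w i - L%:R * w N'.
    by rewrite sumrB sumr_const_nat subn0 mulr_natl.
  rewrite addrAC subrK lerDl.
  rewrite big_nat_cond; apply: sumr_ge0 => k /andP [/andP [_ Hk] _].
  by rewrite subr_ge0; apply: w_mono.
have := limr_ge (cvgP _ Hc) Hn.
rewrite (cvg_lim (@Rhausdorff R) Hc) subrr mulr0 addr0; apply; exact: nat_proper_filter.
Unshelve. all: end_near.
Qed.

Variables (G : T -> R) (B : R).
Hypothesis Gy0 : G y = 0.
Hypothesis B_gt0 : 0 < B.
Hypothesis Ginc : forall x q, q \in step x -> `|G q.2 - G x| <= B.
Hypothesis drift_ge0 : forall x, 0 <= \sum_(q <- step x) q.1 * (G q.2 - G x).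
Hypothesis var_gt0 : 0 < \sum_(q <- step y) q.1 * (G q.2 - G y) ^+ 2.

Let d x := \sum_(q <- step x) q.1 * (G q.2 - G x).
Let v x := \sum_(q <- step x) q.1 * (G q.2 - G x) ^+ 2.
Let G2 x := G x ^+ 2.
Let Tsum L := \sum_(0 <= k < L) w k.

Lemma sq_le (a b : R) : `|a| <= b -> a ^+ 2 <= b ^+ 2.
Proof.
move=> H; rewrite -real_normK ?num_real // !expr2.
by apply: ler_pM => //; apply: le_trans H.
Qed.

Lemma Wl_ge0 (l : seq (R * T)) (h : T -> R) : (forall p, p \in l -> 0 <= p.1) -> (forall x, 0 <= h x) -> 0 <= Wl l h.
Proof.
move=> H1 H2; rewrite /Wl big_seq; apply: sumr_ge0 => p Hp.
by apply: mulr_ge0; [exact: H1 | exact: H2].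
Qed.

Lemma Wl_zero (l : seq (R * T)) (h : T -> R) : (forall p, p \in l -> p.1 * h p.2 = 0) -> Wl l h = 0.
Proof. by move=> H; rewrite /Wl big_seq big1. Qed.

Lemma PfG x : Pf step G x = G x + d x.
Proof.
rewrite /Pf /d.
have -> : \sum_(q <- step x) q.1 * G q.2 =
  \sum_(q <- step x) (G x * q.1 + q.1 * (G q.2 - G x)).
  by apply: eq_bigr => q _; ring.
by rewrite big_split /= -mulr_sumr step_sum1 mulr1.
Qed.

Lemma PfG2 x : Pf step G2 x = G2 x + 2 * G x * d x + v x.
Proof.
rewrite /Pf /d /v /G2.
have -> : \sum_(q <- step x) q.1 * G q.2 ^+ 2 =
  \sum_(q <- step x) (G x ^+ 2 * q.1 + 2 * G x * (q.1 * (G q.2 - G x))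
                      + q.1 * (G q.2 - G x) ^+ 2).
  by apply: eq_bigr => q _; ring.
by rewrite !big_split /= -!mulr_sumr step_sum1 mulr1.
Qed.

Lemma gstep (l : seq (R * T)) : Wl (stepL step A l) G = Wl l G + Wl l d.
Proof.
have := one_step step A l G; rewrite Fl0 // addr0 => ->.
by rewrite -WlD; apply: Wl_ext => p _; rewrite PfG.
Qed.

Lemma g2step (l : seq (R * T)) : Wl (stepL step A l) G2 =
  Wl l G2 + 2 * Wl l (fun x => G x * d x) + Wl l v.
Proof.
have := one_step step A l G2; rewrite Fl0 ?addr0; last by rewrite /G2 Gy0 expr0n.
move=> ->; rewrite -WlZ -!WlD; apply: Wl_ext => p _; rewrite PfG2; congr (_ * _); ring.
Qed.

Lemma lk_bound k p : p \in lk k -> `|G p.2| <= B * k%:R.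
Proof.
elim: k p => [|k IH] p.
  by rewrite /lk /= inE => /eqP -> /=; rewrite Gy0 normr0 mulr0.
move=> /mem_stepL [p' [q [Hp' Hq _ ->]]] /=.
have -> : G q.2 = (G q.2 - G p'.2) + G p'.2 by ring.
apply: le_trans (ler_normD _ _) _.
rewrite -addn1 natrD mulrDr mulr1 addrC.
by apply: lerD; [exact: IH | exact: Ginc].
Qed.

Lemma d_ge0 x : 0 <= d x.
Proof. exact: drift_ge0. Qed.

Let D k := Wl (lk k) d.

Lemma D_ge0 k : 0 <= D k.
Proof. apply: Wl_ge0 => [p|x]; [exact: lk_ge0 | exact: d_ge0]. Qed.

Lemma gW_sum K : Wl (lk K) G = \sum_(0 <= k < K) D k.
Proof.
elim: K => [|K IH]; first by rewrite big_geq // /Wl /= big_seq1 Gy0 mulr0.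
by rewrite big_nat_recr //= -IH /lk /= gstep.
Qed.

Lemma gW_le K : Wl (lk K) G <= B * K%:R * w K.
Proof.
rewrite /w -WlZ; apply: Wl_le => p Hp; rewrite mulr1.
apply: ler_wpM2l; first exact: lk_ge0 Hp.
by apply: le_trans (ler_norm _) (lk_bound Hp).
Qed.

Lemma Tdiff K : K%:R * w (K + K) <= Tsum (K + K) - Tsum K.
Proof.
rewrite /Tsum (big_cat_nat (leq0n K) (leq_addr K K)) /= addrC addrK.
have -> : K%:R * w (K + K) = \sum_(K <= k < K + K) w (K + K).
  by rewrite sumr_const_nat addnK mulr_natl.
apply: ler_sum_nat => k /andP [_ Hk].
by apply: w_mono; apply: ltnW.
Qed.

Lemma archi_mul (c x : R) : 0 < c -> 0 <= x -> exists j : nat, x < j%:R * c.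
Proof.
move=> Hc Hx; exists (Num.Def.archi_bound (x / c)).
by rewrite -ltr_pdivrMr // archi_boundP // divr_ge0 // ltW.
Qed.

Lemma T_ge0 L : 0 <= Tsum L.
Proof. by apply: sumr_ge0 => k _; apply: w_ge0. Qed.

Lemma E_ge0 : 0 <= E.
Proof. exact: le_trans (T_ge0 0) (Tbound 0). Qed.

Lemma stage1 k : D k = 0.
Proof.
apply/eqP; rewrite eq_le D_ge0 andbT; apply/negP => /negP; rewrite -ltNge => Hd.
set c := D k / (2 * B).
have Hc : 0 < c by rewrite divr_gt0 // mulr_gt0.
have key K : (k < K + K)%N -> c <= Tsum (K + K) - Tsum K.
  move=> HK; rewrite /c ler_pdivrMr ?mulr_gt0 //.
  apply: (@le_trans _ _ (\sum_(0 <= i < K + K) D i)).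
    rewrite big_mkord (bigD1 (Ordinal HK)) //= lerDl.
    by apply: sumr_ge0 => i _; apply: D_ge0.
  rewrite -gW_sum; apply: le_trans (gW_le _) _.
  have -> : B * (K + K)%:R * w (K + K) = (K%:R * w (K + K)) * (2 * B).
    by rewrite natrD; ring.
  by rewrite ler_pM2r ?mulr_gt0 // Tdiff.
have iterj j : j%:R * c <= Tsum (k.+1 * 2 ^ j).
  elim: j => [|j IH]; first by rewrite mul0r T_ge0.
  have Hk : (k < k.+1 * 2 ^ j + k.+1 * 2 ^ j)%N.
    apply: (@leq_trans (k.+1 * 2 ^ j)); last exact: leq_addr.
    by rewrite -{1}[k.+1]muln1 leq_mul2l expn_gt0.
  have := key _ Hk; rewrite expnS mulnCA mul2n -addnn.
  have -> : j.+1%:R * c = j%:R * c + c by rewrite mulrS mulrDl mul1r addrC.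
  move: IH; set a := Tsum _; set b := Tsum _.
  move=> H1 H2; lra.
have [j Hj] := archi_mul Hc E_ge0.
have := le_trans (iterj j) (Tbound _); rewrite leNgt Hj //.
Qed.
Lemma sum_seq_eq0 (l : seq (R * T)) (F : R * T -> R) :
  (forall p, p \in l -> 0 <= F p) -> \sum_(p <- l) F p = 0 ->
  forall p, p \in l -> F p = 0.
Proof.
elim: l => [//|a l IH] H; rewrite big_cons => /eqP.
rewrite paddr_eq0 ?H ?mem_head //; last first.
  by rewrite big_seq; apply: sumr_ge0 => p Hp; apply: H; rewrite inE Hp orbT.
case/andP => /eqP Ha /eqP Hl p; rewrite inE => /orP [/eqP -> //|Hp].
by apply: IH => // p' Hp'; apply: H; rewrite inE Hp' orbT.
Qed.

Lemma good_lk k p : p \in lk k -> 0 < p.1 -> d p.2 = 0.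
Proof.
move=> Hp Hp1; have := sum_seq_eq0 _ (stage1 k) Hp.
move=> /(_ _) H; have {H} : p.1 * d p.2 = 0.
  apply: H => p' Hp'; apply: mulr_ge0; [exact: lk_ge0 Hp' | exact: d_ge0].
by move/eqP; rewrite mulf_eq0 gt_eqF //= => /eqP.
Qed.

Lemma single_ge0 z m r : r \in iter m (stepL step A) [:: (1, z)] -> 0 <= r.1.
Proof. by apply: iter_ge0 => p'; rewrite inE => /eqP -> /=. Qed.

Lemma propag K p m r : p \in lk K -> 0 < p.1 ->
  r \in iter m (stepL step A) [:: (1, p.2)] -> 0 < r.1 ->
  (p.1 * r.1, r.2) \in lk (m + K).
Proof.
move=> Hp Hp1; elim: m r => [|m IH] r.
  by rewrite /= inE => /eqP -> _ /=; rewrite mulr1; case: p Hp {Hp1}.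
move=> /= /mem_stepL [r' [q [Hr' Hq HA ->]]] /= Hpos.
have Hr'1 : 0 < r'.1.
  rewrite lt0r (single_ge0 Hr') andbT; apply/negP => /eqP H0.
  by move: Hpos; rewrite H0 mul0r ltxx.
have := mem_stepL2 (IH _ Hr' Hr'1) Hq HA; rewrite /= mulrA.
by [].
Qed.

Lemma good_single K p m r : p \in lk K -> 0 < p.1 ->
  r \in iter m (stepL step A) [:: (1, p.2)] -> r.1 * d r.2 = 0.
Proof.
move=> Hp Hp1 Hr; have := single_ge0 Hr; rewrite le0r => /orP [/eqP -> |Hr1].
  by rewrite mul0r.
by rewrite (good_lk (propag Hp Hp1 Hr Hr1)) ?mulr0 // mulr_gt0.
Qed.

Lemma mart K p m : p \in lk K -> 0 < p.1 ->
  Wl (iter m (stepL step A) [:: (1, p.2)]) G = G p.2.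
Proof.
move=> Hp Hp1; elim: m => [|m IH]; first by rewrite /Wl /= big_seq1 mul1r.
rewrite /= gstep IH (Wl_zero (h := d)) ?addr0 // => r Hr.
exact: good_single Hp Hp1 Hr.
Qed.

Lemma Wl1_ge0 (l : seq (R * T)) : (forall p, p \in l -> 0 <= p.1) -> 0 <= Wl l (fun _ => 1).
Proof. by move=> H; apply: Wl_ge0 => // x; apply: ler01. Qed.

Lemma single_bound K p m : p \in lk K -> 0 < p.1 ->
  2 * G p.2 ^+ 2 - G p.2 ^+ 2 * Wl (iter m (stepL step A) [:: (1, p.2)]) (fun _ => 1)
  <= Wl (iter m (stepL step A) [:: (1, p.2)]) G2.
Proof.
move=> Hp Hp1; set u := iter _ _ _; set c := G p.2.
have -> : Wl u G2 = Wl u (fun x => (G x - c) ^+ 2) + (2 * c * Wl u G + (- c ^+ 2) * Wl u (fun _ => 1)).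
  rewrite -!WlZ -!WlD; apply: Wl_ext => r _; rewrite /G2; congr (_ * _); ring.
rewrite (mart _ Hp Hp1) -/c.
have : 0 <= Wl u (fun x => (G x - c) ^+ 2).
  by apply: Wl_ge0 => [r|x]; [exact: single_ge0 | exact: sqr_ge0].
move: (Wl u (fun x => (G x - c) ^+ 2)) (Wl u (fun _ => 1)) => a b Ha.
have -> : 2 * c * c = 2 * c ^+ 2 by rewrite expr2 mulrA.
set s := c ^+ 2; lra.
Qed.

Let g2 k := Wl (lk k) G2.

Lemma g2S k : g2 k.+1 = g2 k + Wl (lk k) v.
Proof.
rewrite /g2 /lk /= g2step (Wl_zero (h := fun x => G x * d x)) ?mulr0 ?addr0 // => p Hp.
have := lk_ge0 Hp; rewrite le0r => /orP [/eqP -> |Hp1]; first by rewrite mul0r.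
by rewrite (good_lk Hp Hp1) !mulr0.
Qed.

Lemma v_ge0 x : 0 <= v x.
Proof.
rewrite /v big_seq; apply: sumr_ge0 => q Hq; apply: mulr_ge0; [exact: step_ge0 Hq | exact: sqr_ge0].
Qed.

Lemma v_le x : v x <= B ^+ 2.
Proof.
rewrite /v -[leRHS]mulr1 -(step_sum1 x) mulr_sumr big_seq [leRHS]big_seq.
apply: ler_sum => q Hq; rewrite [leRHS]mulrC; apply: ler_wpM2l; first exact: step_ge0 Hq.
exact: sq_le (Ginc Hq).
Qed.

Lemma g2_le k : g2 k <= B ^+ 2 * Tsum k.
Proof.
elim: k => [|k IH].
  by rewrite /g2 /Tsum big_geq // mulr0 /Wl /= big_seq1 /G2 Gy0 expr0n mulr0.
rewrite g2S /Tsum big_nat_recr //= mulrDr; apply: lerD => //.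
rewrite /w -WlZ; apply: Wl_le => p Hp; rewrite mulr1; apply: ler_wpM2l; first exact: lk_ge0 Hp.
exact: v_le.
Qed.

Lemma g2_mono i j : (i <= j)%N -> g2 i <= g2 j.
Proof.
move/subnK => <-; elim: (j - i)%N => [|m IH] //=.
rewrite addSn g2S; apply: le_trans IH _; rewrite lerDl.
apply: Wl_ge0 => [p|x]; [exact: lk_ge0 | exact: v_ge0].
Qed.

Lemma g2_1 : g2 1 = v y.
Proof. by rewrite g2S /g2 /Wl /= !big_seq1 /G2 Gy0 expr0n !mul1r add0r. Qed.

Lemma decomp K m : 2 * g2 K - (B * K%:R) ^+ 2 * w (m + K) <= g2 (m + K).
Proof.
have Ed h : Wl (lk (m + K)) h = \sum_(p <- lk K) p.1 * Wl (iter m (stepL step A) [:: (1, p.2)]) h.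
  by rewrite /lk iterD Wl_decomp.
rewrite /g2 /w !Ed {2}/Wl mulr_sumr mulr_sumr -sumrB big_seq [leRHS]big_seq; apply: ler_sum => p Hp.
have := lk_ge0 Hp; rewrite le0r => /orP [/eqP -> |Hp1]; first by rewrite !mul0r !mulr0 subrr.
have Hb := single_bound m Hp Hp1.
have Ha : 0 <= Wl (iter m (stepL step A) [:: (1, p.2)]) (fun _ => 1).
  by apply: Wl1_ge0 => r; apply: single_ge0.
have Hs : G p.2 ^+ 2 <= (B * K%:R) ^+ 2 by apply: sq_le; apply: lk_bound.
change (\sum_(p0 <- iter m (stepL step A) [:: (1, p.2)]) p0.1 * 1) with
  (Wl (iter m (stepL step A) [:: (1, p.2)]) (fun _ => 1)).
move: Hb Ha; rewrite /G2; set a := Wl _ (fun _ => 1); set b := Wl _ _; set s := G p.2 ^+ 2.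
move=> Hb Ha.
apply: le_trans (_ : p.1 * (2 * s - s * a) <= _); last by apply: ler_wpM2l => //; apply: ltW.
rewrite mulrBr; apply: lerB; first by rewrite mulrCA.
rewrite mulrCA; apply: ler_wpM2r => //; apply: mulr_ge0 => //; exact: ltW.
Qed.
Lemma final : False.
Proof.
set c := v y.
have Hc : 0 < c by [].
have Hg1 : g2 1 = c by rewrite g2_1.
have Hc2 : 0 < c / 2 by rewrite divr_gt0.
have wN N : N%:R * w N <= E.
  apply: le_trans (Tbound N).
  have -> : N%:R * w N = \sum_(0 <= k < N) w N by rewrite sumr_const_nat subn0 mulr_natl.
  by apply: ler_sum_nat => k /andP [_ Hk]; apply: w_mono; apply: ltnW.
have Hstep j : exists K, (1 <= K)%N /\ j%:R * (c / 2) <= g2 K.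
  elim: j => [|j [K [HK1 Hj]]].
    by exists 1%N; split => //; rewrite mul0r Hg1 ltW.
  have HgK : c <= g2 K by rewrite -Hg1; apply: g2_mono.
  set C := (B * K%:R) ^+ 2.
  have HC : 0 <= C by apply: sqr_ge0.
  have [N0 HN0] := archi_mul Hc2 (mulr_ge0 HC E_ge0).
  have HNpos : 0 < (N0 + K)%:R :> R by rewrite ltr0n addn_gt0 HK1 orbT.
  have Hw : C * w (N0 + K) < c / 2.
    rewrite -(ltr_pM2l HNpos) mulrCA.
    apply: le_lt_trans (_ : C * E < _).
      by apply: ler_wpM2l => //; apply: wN.
    apply: lt_le_trans HN0 _; apply: ler_wpM2r; first exact: ltW.
    by rewrite ler_nat leq_addr.
  have Hd := decomp K N0.
  exists (N0 + K)%N; split; first by rewrite addn_gt0 HK1 orbT.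
  have -> : j.+1%:R * (c / 2) = j%:R * (c / 2) + c / 2 by rewrite mulrS mulrDl mul1r addrC.
  move: Hd Hw Hj HgK; set X := C * w _; set g := g2 K; set g' := g2 _; set jc := j%:R * _.
  move=> *; lra.
have HB : 0 <= B ^+ 2 * E by apply: mulr_ge0; [apply: sqr_ge0 | exact: E_ge0].
have [j Hj] := archi_mul Hc2 HB.
have [K [_ HK]] := Hstep j.
have := le_trans HK (le_trans (g2_le K) (ler_wpM2l (sqr_ge0 B) (Tbound K))).
by rewrite leNgt Hj.
Qed.

End Rec.

Lemma not_posrec (R : realType) (T : eqType) (step : T -> seq (R * T)) (y : T)
  (G : T -> R) (B : R) :
  (forall x q, q \in step x -> 0 <= q.1) ->
  (forall x, \sum_(q <- step x) q.1 = 1) ->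
  G y = 0 -> 0 < B ->
  (forall x q, q \in step x -> `|G q.2 - G x| <= B) ->
  (forall x, 0 <= \sum_(q <- step x) q.1 * (G q.2 - G x)) ->
  0 < \sum_(q <- step y) q.1 * (G q.2 - G y) ^+ 2 ->
  ~ positive_recurrent step y.
Proof.
move=> H1 H2 H3 H4 H5 H6 H7 [Hrec [E HE]].
exact: (final H1 H2 Hrec HE H3 H4 H5 H6 H7).
Qed.
Section Net.
Variables (R : realType) (S : nat) (n : 'I_S -> nat) (sigma : Op n -> 'I_2) (mu : Op n -> R) (l0 : 'I_2).
Hypothesis Hmu : forall o, 0 < mu o.
Hypothesis Hcrit : critical sigma mu.

Definition e (o : Op n) : R := if sigma o == l0 then 1 else -1.
Definition Hf (i : 'I_S) (j : nat) : R :=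
  \sum_(k < (n i).+1 | (j <= k)%N) - (e (op_of k) / mu (op_of k)).
Definition Gn (x : State n) : R :=
  \sum_(q : Queue n) (x q)%:R * Hf (tag q) (val (tagged q)).+1.

Lemma Hf_top i : Hf i (n i).+1 = 0.
Proof. by rewrite /Hf big_pred0 // => k; apply/negbTE; rewrite -ltnNge ltn_ord. Qed.

Lemma I2_neq0 (a : 'I_2) : (a != 0) = (a == 1).
Proof. by case: a => [[|[|]]]. Qed.

Lemma I2_neq1 (a : 'I_2) : (a != 1) = (a == 0).
Proof. by case: a => [[|[|]]]. Qed.

Lemma Hf_0 i : Hf i 0 = 0.
Proof.
rewrite /Hf sumrN (bigID (fun k => sigma (op_of k) == l0)) /=.
have E1 : \sum_(k < (n i).+1 | (0 <= k)%N && (sigma (op_of k) == l0)) e (op_of k) / mu (op_of k)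
   = \sum_(k < (n i).+1 | sigma (op_of k) == l0) (mu (op_of k))^-1.
  by apply: eq_big => [k|k /andP [_ /eqP H]]; rewrite ?leq0n // /e H eqxx mul1r.
have E2 : \sum_(k < (n i).+1 | (0 <= k)%N && ~~ (sigma (op_of k) == l0)) e (op_of k) / mu (op_of k)
   = - \sum_(k < (n i).+1 | sigma (op_of k) != l0) (mu (op_of k))^-1.
  rewrite -sumrN; apply: eq_big => [k|k /andP [_ H]]; rewrite ?leq0n //.
  by rewrite /e (negbTE H) mulN1r.
rewrite E1 E2.
have : l0 = 0 \/ l0 = 1 by case: l0 => [[|[|]]] // H; [left|right]; apply: val_inj.
case=> ->.
  have -> : \sum_(k < (n i).+1 | sigma (op_of k) != 0) (mu (op_of k))^-1 =
     \sum_(k < (n i).+1 | sigma (op_of k) == 1) (mu (op_of k))^-1.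
    by apply: eq_bigl => k; rewrite I2_neq0.
  by rewrite (Hcrit i) subrr oppr0.
have -> : \sum_(k < (n i).+1 | sigma (op_of k) != 1) (mu (op_of k))^-1 =
   \sum_(k < (n i).+1 | sigma (op_of k) == 0) (mu (op_of k))^-1.
  by apply: eq_bigl => k; rewrite I2_neq1.
by rewrite (Hcrit i) subrr oppr0.
Qed.

Lemma Hf_step (o : Op n) :
  Hf (tag o) (val (tagged o)) = - (e o / mu o) + Hf (tag o) (val (tagged o)).+1.
Proof.
case: o => i j /=; rewrite /Hf (bigD1 j) //=; congr (_ + _).
by apply: eq_bigl => k; rewrite ltn_neqAle andbC eq_sym.
Qed.

Lemma queue_eq (q1 q2 : Queue n) : tag q1 = tag q2 -> val (tagged q1) = val (tagged q2) -> q1 = q2.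
Proof. by case: q1 => i1 j1; case: q2 => i2 j2 /= Ei; subst i2 => /val_inj ->. Qed.

Lemma pick_sum (i : 'I_S) (m : nat) (F : 'I_S -> nat -> R) :
  \sum_(q : Queue n) (if (tag q == i) && (val (tagged q) == m) then F (tag q) (val (tagged q)) else 0)
  = if (m < n i)%N then F i m else 0.
Proof.
case: ltnP => Hm.
  rewrite (bigD1 (existT (fun i => 'I_(n i)) i (Ordinal Hm))) //=.
  rewrite ?eqxx /= big1 ?addr0 // => q Hne; case: ifP => // /andP [/eqP Ht /eqP Hv].
  have Eq : q = existT (fun i => 'I_(n i)) i (Ordinal Hm) by apply: queue_eq.
  by rewrite Eq eqxx in Hne.
apply: big1 => q _; case: ifP => // /andP [/eqP Ht /eqP Hv].
have H := ltn_ord (tagged q); rewrite Hv in H.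
have H2 : (m < n i)%N by rewrite -Ht.
by move: (leq_trans H2 Hm); rewrite ltnn.
Qed.

Lemma dG x o : avail x o -> Gn (Defs.next x o) - Gn x = e o / mu o.
Proof.
move=> Hav.
set i := tag o; set j := val (tagged o).
have Hq q : ((Defs.next x o q)%:R - (x q)%:R : R) =
   if tag q == i then ((val (tagged q) == j)%:R - ((val (tagged q)).+1 == j)%:R) else 0.
  rewrite /Defs.next ffunE; case: ifP => Ht; last by rewrite subrr.
  case E2: ((val (tagged q)).+1 == j).
    have Hb1 : (val (tagged q) == j) = false by rewrite -(eqP E2) ltn_eqF.
    have Hx : (0 < x q)%N.
      move: Hav; rewrite /avail => /orP [/eqP H0 | /existsP [q' /and3P [Ht' Hv' Hx']]].
        by move: E2; rewrite /j H0.
      have -> : q = q' by apply: queue_eq; [rewrite (eqP Ht) (eqP Ht') | apply/eqP; rewrite -eqSS (eqP Hv') E2].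
      exact: Hx'.
    rewrite Hb1 /= addn0 natrB //; ring.
  by rewrite subn0 natrD /= subr0 addrAC subrr add0r.
rewrite /Gn -sumrB.
under eq_bigr => q _ do rewrite -mulrBl Hq.
have -> : \sum_(q : Queue n) (if tag q == i then ((val (tagged q) == j)%:R - ((val (tagged q)).+1 == j)%:R) else 0) * Hf (tag q) (val (tagged q)).+1
  = \sum_(q : Queue n) (if (tag q == i) && (val (tagged q) == j) then Hf (tag q) (val (tagged q)).+1 else 0)
  - \sum_(q : Queue n) (if (tag q == i) && ((val (tagged q)).+1 == j) then Hf (tag q) (val (tagged q)).+1 else 0).
  rewrite -sumrB; apply: eq_bigr => q _.
  case: (tag q == i); last by rewrite /= mul0r subrr.
  case: (val (tagged q) == j); case: ((val (tagged q)).+1 == j); rewrite /=; ring.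
have Hj : (j < (n i).+1)%N := ltn_ord (tagged o).
have S1 : \sum_(q : Queue n) (if (tag q == i) && (val (tagged q) == j) then Hf (tag q) (val (tagged q)).+1 else 0)
   = Hf i j.+1.
  rewrite (pick_sum i j (fun a b => Hf a b.+1)); case: ltnP => // Hge.
  have -> : j = n i by apply/eqP; rewrite eqn_leq Hge -ltnS Hj.
  by rewrite Hf_top.
have S2 : forall m, (m < (n i).+1)%N -> \sum_(q : Queue n) (if (tag q == i) && ((val (tagged q)).+1 == m) then Hf (tag q) (val (tagged q)).+1 else 0)
   = Hf i m.
  case => [|j'] Hj'.
    by rewrite Hf_0 big1 // => q _; rewrite andbF.
  rewrite (eq_bigr (fun q => if (tag q == i) && (val (tagged q) == j') then Hf (tag q) (val (tagged q)).+1 else 0)); last first.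
    by move=> q _; rewrite eqSS.
  by rewrite (pick_sum i j' (fun a b => Hf a b.+1)) -ltnS Hj'.
rewrite S1 (S2 _ Hj) /i /j (Hf_step o); ring.
Qed.
Variables (pol : policy n) (o0 : Op n).
Hypothesis Hnonid : nonidling sigma pol.
Hypothesis Ho0 : sigma o0 = l0.
Hypothesis Hav0 : forall x, avail x o0.

Lemma pol_some x l o : pol x l = Some o -> sigma o = l /\ avail x o.
Proof. by move=> E; have := Hnonid x l; rewrite E. Qed.

Lemma pol_l0 x : exists o, pol x l0 = Some o.
Proof.
case E: (pol x l0) => [a|]; first by exists a.
have := Hnonid x l0; rewrite E => H.
by have := H o0 Ho0; rewrite Hav0.
Qed.

Lemma mem_active x o : o \in active pol x -> exists l, pol x l = Some o.
Proof. by rewrite /active mem_pmap => /mapP [l _ E]; exists l. Qed.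

Lemma active_ne x : active pol x != [::].
Proof.
have [ o Ho] := pol_l0 x.
have : o \in active pol x.
  by rewrite /active mem_pmap; apply/mapP; exists l0; rewrite ?mem_enum.
by case: (active pol x).
Qed.

Lemma sum_pos_seq (s : seq (Op n)) (F : Op n -> R) : s != [::] ->
  (forall o, o \in s -> 0 < F o) -> 0 < \sum_(o <- s) F o.
Proof.
case: s => [//|a s] _ H; rewrite big_cons.
have H1 : 0 < F a by apply: H; rewrite mem_head.
have H2 : 0 <= \sum_(o <- s) F o.
  by rewrite big_seq; apply: sumr_ge0 => o Ho; apply: ltW; apply: H; rewrite inE Ho orbT.
lra.
Qed.

Lemma tot_gt0 x : 0 < total_rate mu pol x.
Proof. by apply: sum_pos_seq; [exact: active_ne | move=> o _; exact: Hmu]. Qed.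

Lemma jsE x : jump_step mu pol x =
  [seq (mu o / total_rate mu pol x, Defs.next x o) | o <- active pol x].
Proof.
rewrite /jump_step; have := active_ne x.
by case: (active pol x).
Qed.

Lemma sum_pmap (f : 'I_2 -> option (Op n)) (F : Op n -> R) (s : seq 'I_2) :
  \sum_(o <- pmap f s) F o = \sum_(a <- s) oapp F 0 (f a).
Proof.
elim: s => [|a s IH] /=; first by rewrite !big_nil.
rewrite big_cons -IH; case: (f a) => [b|] /=; by rewrite ?big_cons ?add0r.
Qed.

Lemma e_sum x : 0 <= \sum_(o <- active pol x) e o.
Proof.
rewrite /active sum_pmap.
have -> : enum 'I_2 = [:: ord0; ord_max] by apply: (inj_map val_inj); rewrite val_enum_ord.
rewrite big_cons big_seq1.
have Hge l : -1 <= oapp e 0 (pol x l).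
  case E: (pol x l) => [a|] /=; last by rewrite lerN10.
  by rewrite /e; case: ifP => _; rewrite ?lexx // (le_trans (lerN10 _)) ?ler01.
have Hl0 : oapp e 0 (pol x l0) = 1.
  have [ o Ho] := pol_l0 x; rewrite Ho /= /e.
  by have [-> _] := pol_some Ho; rewrite eqxx.
have [E0|E1] : l0 = ord0 \/ l0 = ord_max.
  have := ltn_ord l0; case H: (val l0) => [|[|k]] // _; [left|right]; apply: val_inj; by rewrite H.
  have := Hge ord_max; rewrite -E0 Hl0; lra.
have := Hge ord0; rewrite -E1 Hl0; lra.
Qed.

Definition Bn : R := \sum_(o : Op n) (mu o)^-1.

Lemma le_Bn o : (mu o)^-1 <= Bn.
Proof.
rewrite /Bn (bigD1 o) //= lerDl; apply: sumr_ge0 => o' _.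
by rewrite invr_ge0 ltW.
Qed.

Lemma e_norm o : `|e o / mu o| = (mu o)^-1.
Proof.
rewrite normrM normfV (gtr0_norm (Hmu o)) /e.
by case: ifP => _; rewrite ?normrN normr1 mul1r.
Qed.

Lemma e_neq0 o : e o != 0.
Proof. by rewrite /e; case: ifP => _; rewrite ?oppr_eq0 oner_eq0. Qed.

Lemma net_main y : positive_recurrent (jump_step mu pol) y -> False.
Proof.
move=> Hpr.
set G := Gn.
apply: (@not_posrec _ _ _ y (fun x => G x - G y) Bn _ _ _ _ _ _ _ Hpr).
- move=> x q; rewrite jsE => /mapP [ o Ho ->] /=.
  by apply: divr_ge0; [exact: ltW | exact: ltW (tot_gt0 x)].
- move=> x; rewrite jsE big_map /= -mulr_suml.
  rewrite -/(total_rate mu pol x) divff //.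
  by rewrite gt_eqF // (tot_gt0 x).
- by rewrite subrr.
- apply: lt_le_trans (le_Bn o0); by rewrite invr_gt0.
- move=> x q; rewrite jsE => /mapP [ o Ho ->] /=.
  have [l Hl] := mem_active Ho; have [_ Hav] := pol_some Hl.
  rewrite opprB addrA subrK /G (dG Hav) e_norm; exact: le_Bn.
- move=> x; rewrite jsE big_map /=.
  have Ht := tot_gt0 x.
  rewrite (eq_big_seq (fun o => e o / total_rate mu pol x)); last first.
    move=> o Ho; have [l Hl] := mem_active Ho; have [_ Hav] := pol_some Hl.
    rewrite opprB addrA subrK /G (dG Hav).
    by field; apply/andP; split; [rewrite gt_eqF | rewrite gt_eqF].
  rewrite -mulr_suml; apply: divr_ge0; last exact: ltW.
  exact: (e_sum x).
- rewrite jsE big_map /=.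
  apply: sum_pos_seq; first exact: (active_ne y).
  move=> o Ho; have [l Hl] := mem_active Ho; have [_ Hav] := pol_some Hl.
  rewrite subrr subr0 /G (dG Hav).
  apply: mulr_gt0; first by apply: divr_gt0 => //; exact: tot_gt0.
  rewrite lt0r sqr_ge0 andbT sqrf_eq0 mulf_eq0 invr_eq0 negb_or e_neq0 /=.
  by rewrite gt_eqF.
Qed.

End Net.

Theorem theorem4 (R : realType) (S : nat) (n : 'I_S -> nat)
  (sigma : Op n -> 'I_2) (mu : Op n -> R) :
  (0 < S)%N ->
  (forall i : 'I_S, (1 <= n i)%N) ->
  (forall o : Op n, 0 < mu o) ->
  critical sigma mu ->
  forall pol : policy n, nonidling sigma pol ->
  forall x0 : State n,
    ~ exists C : pred (State n),
        pos_rec_class (jump_step mu pol) C /\ reached_as (jump_step mu pol) x0 C.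
Proof.
move=> HS Hn Hmu Hcrit pol Hnonid x0 [C [[[[y Hy] _] Hprc] _]].
have Hpr := Hprc y Hy.
pose i0 : 'I_S := Ordinal HS.
pose o0 := op_of (ord0 : 'I_(n i0).+1).
have Hav0 : forall x, avail x o0 by move=> x; rewrite /avail.
exact: (net_main Hmu Hcrit Hnonid (erefl (sigma o0)) Hav0 Hpr).
Qed.
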